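(* For every non-empty index $\mathbf k$, \[\zeta^{s,t,\star}_{\widehat{\mathcal{RS}}}(\mathbf k)=\frac{1}{2\pi i}\Bigl\langle\Phi_{\mathcal{RS}}(X_\infty,X_1),\ (1-e_0s)^{-1}(e_1-e_0)\,\omega(\mathbf k)\,(e_1-e_0)(1-e_0t)^{-1}\Bigr\rangle,\] where $X_\infty=-X_0-X_1$.
   Context: $s,t$ commuting indeterminates, $X_0,X_1$ noncommuting variables. An index is a finite tuple $\mathbf{k}=(k_1,\dots,k_r)$ of positive integers, $\mathrm{dep}(\mathbf k)=r$, $\mathrm{wt}(\mathbf k)=\sum k_i$. $\mathfrak H=\mathbb Q\langle e_0,e_1\rangle$, $e_{\mathbf{k}}=e_1e_0^{k_1-1}\cdots e_1e_0^{k_r-1}$; for non-empty $\mathbf k$, $\omega(\mathbf k)$ is defined by $e_1\omega(\mathbf k)=e_{\mathbf k}$. $Z^{ш}:(\mathfrak H,ш)\to\mathbb R$ is the shuffle-algebra homomorphism with $Z^{ш}(e_{\mathbf k})=(-1)^{\mathrm{dep}}\zeta(\mathbf k)$ for admissible $\mathbf k$ (empty or $k_r\ge2$) and $Z^{ш}(e_0)=Z^{ш}(e_1)=0$. $\Phi_{\mathrm{KZ}}(X_0,X_1)=\sum_{n\ge0}\sum_{a_i\in\{0,1\}}Z^{ш}(e_{a_1}\cdots e_{a_n})X_{a_n}\cdots X_{a_1}$; $\Phi_{\mathcal{RS}}(X_0,X_1)=\exp(\pi iX_0/2)\Phi_{\mathrm{KZ}}(X_1,X_0)\exp(2\pi iX_1)\Phi_{\mathrm{KZ}}(X_0,X_1)\exp(\pi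 iX_0/2)$, and $\Phi_{\mathcal{RS}}(A,B)$ denotes substitution $X_0\mapsto A,X_1\mapsto B$. Pairing: for $\Phi=\sum_Wc_WW$ over words $W$ in $X_0,X_1$, $\langle\Phi,e_{a_1}\cdots e_{a_n}\rangle=c_{X_{a_1}\cdots X_{a_n}}$, extended linearly and coefficientwise to $\mathfrak H[[s,t]]$. For non-empty $\mathbf k$, $\zeta^{s,t}_{\widehat{\mathcal{RS}}}(\mathbf k)=\frac{(-1)^{\mathrm{wt}(\mathbf k)+\mathrm{dep}(\mathbf k)}}{2\pi i}\langle\Phi_{\mathcal{RS}}(X_0,X_1),(1+e_0s)^{-1}e_1\omega(\mathbf k)e_1(1+e_0t)^{-1}\rangle$. $\mathbf l\preceq\mathbf k$ means $\mathbf l$ is obtained from $(k_1\circ\cdots\circ k_r)$ by replacing each $\circ$ by a comma or a plus sign, and $\zeta^{s,t,\star}_{\widehat{\mathcal{RS}}}(\mathbf k)=\sum_{\mathbf l\preceq\mathbf k}\zeta^{s,t}_{\widehat{\mathcal{RS}}}(\mathbf l)$. *)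

(* Defs.v *)
From HB Require Import structures.
From mathcomp Require Import all_boot all_order all_algebra.
From mathcomp Require Import reals topology normedtype sequences trigo.
From mathcomp.real_closed Require Import complex.

Set Implicit Arguments.
Unset Strict Implicit.
Unset Printing Implicit Defensive.

Import Order.TTheory GRing.Theory Num.Theory.
Import numFieldTopology.Exports numFieldNormedType.Exports.
Local Open Scope ring_scope.

(* Words in the letters e_0 (= false) and e_1 (= true).  The same type is
   used for words in X_0 (= false), X_1 (= true).                          *)
Definition word := seq bool.
Definition l0 : bool := false.
Definition l1 : bool := true.

Definition is_index (k : seq nat) : bool := all (fun x => 0 < x)%N k.
Definition wt (k : seq nat) : nat := sumn k.
Definition dep (k : seq nat) : nat := size k.
Definition admissible (k : seq nat) : bool :=
  (k == [::]) || (1 < last 0%N k)%N.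

(* e_k = e_1 e_0^{k_1-1} ... e_1 e_0^{k_r-1} *)
Definition e_idx (k : seq nat) : word :=
  flatten [seq l1 :: nseq ki.-1 l0 | ki <- k].
(* omega(k), defined by e_1 omega(k) = e_k for non-empty k *)
Definition omega (k : seq nat) : word := behead (e_idx k).

(* The indices l with l \preceq k: replace each "o" in (k_1 o ... o k_r)
   by a comma or a plus sign (list of all 2^(r-1) choices). *)
Fixpoint comps (a : nat) (rest : seq nat) : seq (seq nat) :=
  match rest with
  | [::] => [:: [:: a]]
  | b :: r => [seq a :: l | l <- comps b r] ++ comps (a + b)%N r
  end.
Definition preceq_list (k : seq nat) : seq (seq nat) :=
  if k is a :: r then comps a r else [:: [::]].

(* Shuffle product of two words, as a list (multiset) of words. *)
Fixpoint shuffle (u v : word) : seq word :=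
  let fix sh_aux (v : word) : seq word :=
    match u, v with
    | [::], _ => [:: v]
    | _, [::] => [:: u]
    | a :: u', b :: v' =>
        [seq a :: w | w <- shuffle u' v] ++ [seq b :: w | w <- sh_aux v']
    end in
  sh_aux v.

Section MZV.
Variable R : realType.

(* Truncated multiple zeta sum:
   mzv_trunc k m N = sum_{m < n_1 < ... < n_r < N} 1/(n_1^{k_1} ... n_r^{k_r}) *)
Fixpoint mzv_trunc (k : seq nat) (m N : nat) : R :=
  match k with
  | [::] => 1
  | k1 :: k' =>
      \sum_(m.+1 <= n < N) ((n%:R ^+ k1)^-1 * mzv_trunc k' n N)
  end.

Definition mzv (k : seq nat) : R := limn (fun N => mzv_trunc k 0 N).

(* Z : words -> R (extended linearly to H) is the shuffle-regularized
   MZV map Z^sh: a unital shuffle-algebra homomorphism with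
   Z(e_k) = (-1)^dep zeta(k) for admissible k and Z(e0) = Z(e1) = 0.
   (These properties determine Z uniquely.) *)
Definition is_Zsh (Z : word -> R) : Prop :=
  [/\ forall u v : word, Z u * Z v = \sum_(w <- shuffle u v) Z w,
      forall k : seq nat, is_index k -> admissible k ->
        Z (e_idx k) = (-1) ^+ dep k * mzv k,
      Z [:: l0] = 0 & Z [:: l1] = 0].

Local Open Scope complex_scope.
Local Notation C := R[i].

(* Formal noncommutative series in X0, X1 with complex coefficients,
   represented by their coefficient function on words. *)
Definition series := word -> C.

Definition smul (f g : series) : series :=
  fun W => \sum_(j < (size W).+1) f (take j W) * g (drop j W).

Definition sexp (c : C) (a : bool) : series :=
  fun W => if W == nseq (size W) a then c ^+ size W / ((size W)`!)%:R else 0.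

(* Phi_KZ(X0,X1) = sum Z(e_{a1}..e_{an}) X_{an}..X_{a1} *)
Definition PhiKZ (Z : word -> R) : series := fun W => (Z (rev W))%:C.
(* Phi_KZ(X1,X0) *)
Definition PhiKZswap (Z : word -> R) : series :=
  fun W => (Z (rev (map negb W)))%:C.

Definition ipi : C := (pi%:C) * 'i.

Definition PhiRS (Z : word -> R) : series :=
  smul (sexp (ipi / 2%:R) l0)
    (smul (PhiKZswap Z)
      (smul (sexp (2%:R * ipi) l1)
        (smul (PhiKZ Z) (sexp (ipi / 2%:R) l0)))).

(* Substitution X_a |-> sum_b img a b X_b (homogeneous of degree one):
   coefficient of W in Phi(img X0, img X1). *)
Definition ssubst (img : bool -> bool -> C) (f : series) : series :=
  fun W => \sum_(V : (size W).-tuple bool)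
             f V * \prod_(i < size W) img (tnth V i) (nth l0 W i).

(* X_infty = -X0 - X1 substituted for X0, X1 kept. *)
Definition img_inf (a b : bool) : C :=
  if a == l0 then -1 else (if b == l1 then 1 else 0).

(* Elements of H (noncommutative polynomials in e0,e1) as formal linear
   combinations of words. *)
Definition hpoly := seq (C * word).
Definition hmul (p q : hpoly) : hpoly :=
  [seq (x.1 * y.1, x.2 ++ y.2) | x <- p, y <- q].
Definition hword (w : word) : hpoly := [:: (1, w)].
Definition e1_minus_e0 : hpoly := [:: (1, [:: l1]); (-1, [:: l0])].
(* coefficient of s^m in (1 - c e0 s)^{-1} *)
Definition geom (c : C) (m : nat) : hpoly := [:: (c ^+ m, nseq m l0)].

Definition pairing (f : series) (p : hpoly) : C :=
  \sum_(x <- p) x.1 * f x.2.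

(* Power series in s, t with complex coefficients: coefficient functions.
   zeta^{s,t}_RS(k) : coefficient of s^m t^n. *)
Definition zetaRS (Z : word -> R) (k : seq nat) (m n : nat) : C :=
  (-1) ^+ (wt k + dep k) / (2%:R * ipi) *
  pairing (PhiRS Z)
    (hmul (hmul (geom (-1) m) (hword (l1 :: omega k ++ [:: l1]))) (geom (-1) n)).

Definition zetaRS_star (Z : word -> R) (k : seq nat) (m n : nat) : C :=
  \sum_(l <- preceq_list k) zetaRS Z l m n.

(* coefficient of s^m t^n of the right-hand side *)
Definition rhs_prop54 (Z : word -> R) (k : seq nat) (m n : nat) : C :=
  (2%:R * ipi)^-1 *
  pairing (ssubst img_inf (PhiRS Z))
    (hmul (hmul (hmul (hmul (geom 1 m) e1_minus_e0) (hword (omega k)))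
                e1_minus_e0) (geom 1 n)).

End MZV.

(* Main.v *)
Require Import Defs.
From HB Require Import structures.
From mathcomp Require Import all_boot all_order all_algebra.
From mathcomp Require Import reals topology normedtype sequences trigo.
From mathcomp.real_closed Require Import complex.
Set Implicit Arguments. Unset Strict Implicit. Unset Printing Implicit Defensive.
Import Order.TTheory GRing.Theory Num.Theory.
Local Open Scope ring_scope.
From mathcomp Require Import ring zify.

Lemma sum_tupleS (T : finType) (K : nmodType) n (G : n.+1.-tuple T -> K) :
  \sum_(t : n.+1.-tuple T) G t = \sum_(a : T) \sum_(t : n.-tuple T) G [tuple of a :: t].
Proof.
rewrite pair_big /= (reindex (fun p : T * n.-tuple T => [tuple of p.1 :: p.2])) //.
exists (fun t => (thead t, [tuple of behead t])) => [[a t] _ | t _] /=.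
  by rewrite theadE; congr pair; apply: val_inj.
by rewrite -tuple_eta.
Qed.

Lemma sum_tuple0 (T : finType) (K : nmodType) (G : 0.-tuple T -> K) :
  \sum_(t : 0.-tuple T) G t = G [tuple].
Proof.
rewrite (big_pred1 [tuple]) // => t; rewrite [t]tuple0; exact/esym/eqP.
Qed.

Lemma ss0 (R : realType) (img : bool -> bool -> complex R) (F : word -> complex R) : ssubst img F [::] = F [::].
Proof. by rewrite /ssubst sum_tuple0 big_ord0 mulr1. Qed.

Lemma ssS (R : realType) (img : bool -> bool -> complex R) (F : word -> complex R) b W :
  ssubst img F (b :: W) =
  \sum_(a : bool) img a b * ssubst img (fun V => F (a :: V)) W.
Proof.
rewrite /ssubst /= sum_tupleS; apply: eq_bigr => a _.
rewrite mulr_sumr; apply: eq_bigr => t _.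
rewrite big_ord_recl tnth0 /=.
under eq_bigr => i _ do rewrite tnthS.
by rewrite mulrCA.
Qed.
Lemma ss_ext (R : realType) (img : bool -> bool -> complex R) (F G : word -> complex R) W :
  (forall V, F V = G V) -> ssubst img F W = ssubst img G W.
Proof. by move=> FG; apply: eq_bigr => t _; rewrite FG. Qed.

Lemma ss_lin (R : realType) (img : bool -> bool -> complex R) (F G : word -> complex R) c1 c2 W :
  ssubst img (fun U : word => c1 * F U + c2 * G U) W = c1 * ssubst img F W + c2 * ssubst img G W.
Proof.
rewrite /ssubst !mulr_sumr -big_split; apply: eq_bigr => t _.
by rewrite mulrDl !mulrA.
Qed.

Lemma ssl0 (R : realType) (F : word -> complex R) W :
  ssubst (@img_inf R) F (l0 :: W) = - ssubst (@img_inf R) (fun V => F (l0 :: V)) W.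
Proof. by rewrite ssS big_bool /img_inf /= mul0r add0r mulN1r. Qed.

Lemma ssl1 (R : realType) (F : word -> complex R) W :
  ssubst (@img_inf R) F (l1 :: W) =
  ssubst (@img_inf R) (fun V => F (l1 :: V)) W - ssubst (@img_inf R) (fun V => F (l0 :: V)) W.
Proof. by rewrite ssS big_bool /img_inf /= mul1r mulN1r. Qed.

Lemma ss_nseq (R : realType) (F : word -> complex R) m W :
  ssubst (@img_inf R) F (nseq m l0 ++ W) =
  (-1) ^+ m * ssubst (@img_inf R) (fun V => F (nseq m l0 ++ V)) W.
Proof.
elim: m F => [|m IH] F /=; first by rewrite mul1r.
rewrite ssl0 IH exprS. ring.
Qed.

Lemma ss_nseq0 (R : realType) (F : word -> complex R) m :
  ssubst (@img_inf R) F (nseq m l0) = (-1) ^+ m * F (nseq m l0).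
Proof. by have := ss_nseq F m [::]; rewrite cats0 ss0 cats0. Qed.

Lemma ss_cat (R : realType) (img : bool -> bool -> complex R) (F : word -> complex R) u v :
  ssubst img F (u ++ v) =
  ssubst img (fun U : word => ssubst img (fun V => F (U ++ V)) v) u.
Proof.
elim: u F => [|b u IH] F /=; first by rewrite ss0.
rewrite !ssS; apply: eq_bigr => a _; by rewrite IH.
Qed.
Lemma omega_cons a l : omega (a :: l) = nseq a.-1 l0 ++ e_idx l.
Proof. by []. Qed.

Lemma e_idx_cons l : l != [::] -> e_idx l = l1 :: omega l.
Proof. by case: l. Qed.

Lemma comps_ne r : forall a l, l \in comps a r -> l != [::].
Proof.
elim: r => [|b r IH] a l /=; first by rewrite inE => /eqP ->.
rewrite mem_cat => /orP [/mapP [l' _ ->] //|]; exact: IH.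
Qed.

Lemma core (R : realType) r : forall a (G : word -> complex R), (0 < a)%N -> all (fun x => 0 < x)%N r ->
  ssubst (@img_inf R) G (omega (a :: r)) =
  \sum_(l <- comps a r) (-1) ^+ (wt l + dep l) * G (omega l).
Proof.
elim: r => [|b r IH] a G Ha Hr.
  case: a Ha => [//|a'] _.
  have -> : omega [:: a'.+1] = nseq a' l0 by rewrite omega_cons cats0.
  rewrite ss_nseq0 /= big_cons big_nil addr0 /wt /dep /= addn0 addn1 !exprS omega_cons cats0; ring.
move: Hr => /= /andP [Hb Hr].
have E1 : omega (a :: b :: r) = nseq a.-1 l0 ++ l1 :: omega (b :: r) by [].
have E2 : omega ((a + b) :: r) = nseq a.-1 l0 ++ l0 :: omega (b :: r).
  rewrite !omega_cons /=.
  have -> : (a + b).-1 = (a.-1 + b.-1.+1)%N by lia.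
  by rewrite nseqD -catA.
rewrite E1 ss_nseq ssl1 /= big_cat big_map /=.
have H2 := IH (a + b)%N G ltac:(lia) Hr.
rewrite E2 ss_nseq ssl0 in H2.
rewrite -H2 (IH b _ Hb Hr) mulrBr mulrN; congr (_ - _).
rewrite mulr_sumr big_seq [RHS]big_seq; apply: eq_bigr => l Hl.
rewrite omega_cons (e_idx_cons (comps_ne Hl)) /wt /dep.
have -> : (sumn (a :: l) + size (a :: l) = (a.-1 + (sumn l + size l)).+2)%N.
  by rewrite /=; lia.
rewrite !exprS !exprD; ring.
Qed.
Lemma suffix_comb (R : realType) (G : word -> complex R) w n :
  ssubst (@img_inf R) G (w ++ l1 :: nseq n l0) - ssubst (@img_inf R) G (w ++ l0 :: nseq n l0)
  = (-1) ^+ n * ssubst (@img_inf R) (fun U : word => G (U ++ l1 :: nseq n l0)) w.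
Proof.
rewrite !ss_cat.
have E := ss_lin (@img_inf R) (fun U : word => ssubst (@img_inf R) (fun V => G (U ++ V)) (l1 :: nseq n l0))
   (fun U : word => ssubst (@img_inf R) (fun V => G (U ++ V)) (l0 :: nseq n l0)) 1 (-1) w.
have E' := ss_lin (@img_inf R) (fun U : word => G (U ++ l1 :: nseq n l0)) (fun U : word => G (U ++ l1 :: nseq n l0)) ((-1) ^+ n) 0 w.
rewrite !mul1r mulN1r in E; rewrite mul0r addr0 in E'.
rewrite -E -E'; apply: ss_ext => U.
rewrite ssl1 ssl0 !ss_nseq0 /=; ring.
Qed.

Lemma comb4 (R : realType) (F : word -> complex R) m n w :
  ssubst (@img_inf R) F (nseq m l0 ++ l1 :: w ++ l1 :: nseq n l0)
  - ssubst (@img_inf R) F (nseq m l0 ++ l1 :: w ++ l0 :: nseq n l0)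
  - ssubst (@img_inf R) F (nseq m l0 ++ l0 :: w ++ l1 :: nseq n l0)
  + ssubst (@img_inf R) F (nseq m l0 ++ l0 :: w ++ l0 :: nseq n l0)
  = (-1) ^+ m * (-1) ^+ n *
    ssubst (@img_inf R) (fun U : word => F (nseq m l0 ++ l1 :: U ++ l1 :: nseq n l0)) w.
Proof.
rewrite !ss_nseq !ssl1 !ssl0.
have H := suffix_comb (fun V => F (nseq m l0 ++ l1 :: V)) w n.
rewrite -mulrA -H; ring.
Qed.

Theorem proposition5p4 (R : realType) (Z : word -> R) :
  is_Zsh Z ->
  forall k : seq nat, is_index k -> k <> [::] ->
  forall m n : nat, zetaRS_star Z k m n = rhs_prop54 Z k m n.
Proof.
move=> _ [//|a r] Hk _ m n.
move: Hk => /= /andP [Ha Hr].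
rewrite /zetaRS_star /zetaRS /rhs_prop54 /=.
set f := PhiRS Z.
have Hc := core (fun U : word => f (nseq m l0 ++ l1 :: U ++ l1 :: nseq n l0)) Ha Hr.
move: (omega (a :: r)) Hc => w Hc.
rewrite /pairing /hmul /geom /e1_minus_e0 /hword /=.
rewrite !big_cons !big_nil /= -!catA /= !expr1n !mul1r !mulr1 !addr0.
have C4 := comb4 f m n w.

have -> : forall A B Cc D : complex R, A + (-1 * B + (-1 * Cc + -1 * -1 * D)) = A - B - Cc + D.
  by move=> *; ring.
rewrite C4 Hc.
under eq_bigr => l _ do rewrite big_cons big_nil /= addr0 -!catA /=.
rewrite !mulr_sumr; apply: eq_bigr => l _.
rewrite -catA /=; ring.

Qed.
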